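(* Let $(R,d)$ be a fusion algebra with a finite generating set $X\subseteq I$. Then $\omega_X(R,d)=\max\bigl(1,\lim_{n\to\infty}\sqrt[n]{|S_X(n)|}\bigr)$.
   Context: A fusion algebra $(R,d)$ consists of a set $I$ with distinguished $e$ and involution $\alpha\mapsto\bar\alpha$, a unital ring structure on $R=\mathbb{Z}[I]$ with unit $e$ and $\xi\eta=\sum_\alpha N^\alpha_{\xi,\eta}\alpha$, $N^\alpha_{\xi,\eta}\in\mathbb{Z}_{\ge0}$ finitely many nonzero, the involution extending to a $\mathbb{Z}$-linear antimultiplicative involution, Frobenius reciprocity $N^\alpha_{\xi,\eta}=N^\xi_{\alpha,\bar\eta}=N^\eta_{\bar\xi,\alpha}$, and $\mathbb{Z}$-linear multiplicative $d:R\to\mathbb{R}$ with $d(\bar\alpha)=d(\alpha)\ge1$ on $I$. Write $\alpha\subseteq r$ if $\alpha$ has nonzero coefficient in $r$. $|A|=\sum_{\alpha\in A}d(\alpha)^2$. A finite generating set is a finite $X\subseteq I$ with $\bar X=X$ such that every $\alpha\in I$ satisfies $\alpha\subseteq x_1\cdots x_n$ for some $x_i\in X$. $\ell_X(e)=0$, otherwise $\ell_X(\alpha)$ is the least $n\ge1$ with $\alpha\subseteq x_1\cdots x_n$, $x_i\in X$; $B_X(n)=\{\alpha:\ell_X(\alpha)\le n\}$, $S_X(n)=\{\alpha:\ell_X(\alpha)=n\}$. The exponential growth rate is $\omega_X(R,d)=\lim_{n\to\infty}|B_X(n)|^{1/n}$; both this limit and $\lim_n|S_X(n)|^{1/n}$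 exist (the latter equals $0$ when $I$ is finite). *)

(* Defs.v *)
From HB Require Import structures.
From mathcomp Require Import all_boot all_order all_algebra.
From mathcomp Require Import all_classical all_reals all_analysis.
From mathcomp Require Import Rstruct Rstruct_topology.
Set Implicit Arguments. Unset Strict Implicit. Unset Printing Implicit Defensive.
Import Order.TTheory GRing.Theory Num.Theory.
Local Open Scope ring_scope.

(* Conventions.
   - I : eqType is the basis of R = Z[I].
   - N xi eta alpha  is the structure constant N^alpha_{xi,eta}, so that
       xi * eta = sum_alpha (N xi eta alpha) alpha.
   - supp xi eta : seq I is a finite list containing every alpha with
       N xi eta alpha <> 0 (witness of "finitely many nonzero").
   - bar is the involution, e the unit, d the dimension function on I
     (extended Z-linearly to R). *)

Definition is_fusion_algebra (I : eqType) (e : I) (bar : I -> I)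
    (N : I -> I -> I -> nat) (supp : I -> I -> seq I)
    (d : I -> Rdefinitions.R) : Prop :=
  [/\
      (forall xi eta alpha, N xi eta alpha != 0%N -> alpha \in supp xi eta),
      (forall xi alpha, N e xi alpha = (alpha == xi) :> nat /\
                        N xi e alpha = (alpha == xi) :> nat),
      (* associativity: (xi eta) zeta = xi (eta zeta) *)
      (forall xi eta zeta alpha,
          (\sum_(beta <- undup (supp xi eta)) N xi eta beta * N beta zeta alpha =
           \sum_(beta <- undup (supp eta zeta)) N eta zeta beta * N xi beta alpha)%N),
      (* bar is an involution on I whose Z-linear extension is antimultiplicative,
         and Frobenius reciprocity holds *)
      [/\ (forall alpha, bar (bar alpha) = alpha),
          (forall xi eta alpha, N (bar eta) (bar xi) (bar alpha) = N xi eta alpha) &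
          (forall xi eta alpha,
             N xi eta alpha = N alpha (bar eta) xi /\
             N xi eta alpha = N (bar xi) alpha eta)] &
      (* d : Z-linear, multiplicative (and unital), d(bar a) = d(a) >= 1 on I *)
      [/\ d e = 1,
          (forall xi eta, d xi * d eta =
             \sum_(alpha <- undup (supp xi eta)) (N xi eta alpha)%:R * d alpha),
          (forall alpha, d (bar alpha) = d alpha) &
          (forall alpha, 1 <= d alpha)]].

(* A finite list containing the support of the product x_1 ... x_n
   (the empty word is the unit e). *)
Fixpoint wsupp (I : eqType) (e : I) (supp : I -> I -> seq I) (w : seq I)
    : seq I :=
  match w with
  | [::] => [:: e]
  | x :: w' => undup (flatten [seq supp x beta | beta <- wsupp e supp w'])
  end.

(* wcoef w alpha = coefficient of alpha in the product x_1 x_2 ... x_n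
   (computed as x_1 (x_2 (... x_n))), w = [:: x_1; ...; x_n]. *)
Fixpoint wcoef (I : eqType) (e : I) (N : I -> I -> I -> nat)
    (supp : I -> I -> seq I) (w : seq I) (alpha : I) : nat :=
  match w with
  | [::] => (alpha == e : nat)
  | x :: w' => (\sum_(beta <- wsupp e supp w') N x beta alpha * wcoef e N supp w' beta)%N
  end.

Definition is_fin_generating_set (I : eqType) (e : I) (bar : I -> I)
    (N : I -> I -> I -> nat) (supp : I -> I -> seq I) (X : seq I) : Prop :=
  (forall x, x \in X -> bar x \in X) /\
  (forall alpha : I, exists w : seq I,
      [/\ (0 < size w)%N, all (mem X) w & wcoef e N supp w alpha != 0%N]).

Fixpoint words (I : eqType) (X : seq I) (n : nat) : seq (seq I) :=
  match n with
  | 0 => [:: [::]]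
  | n'.+1 => [seq x :: w | x <- X, w <- words X n']
  end.

Definition words_le (I : eqType) (X : seq I) (n : nat) : seq (seq I) :=
  flatten [seq words X m | m <- iota 0 n.+1].

(* alpha \in B_X(n), i.e. l_X(alpha) <= n: alpha occurs in a product of
   at most n generators (the empty product being e, so l_X(e) = 0). *)
Definition inBall (I : eqType) (e : I) (N : I -> I -> I -> nat)
    (supp : I -> I -> seq I) (X : seq I) (n : nat) (alpha : I) : bool :=
  has (fun w => wcoef e N supp w alpha != 0%N) (words_le X n).

Definition inSphere (I : eqType) (e : I) (N : I -> I -> I -> nat)
    (supp : I -> I -> seq I) (X : seq I) (n : nat) (alpha : I) : bool :=
  inBall e N supp X n alpha &&
  (if n is n'.+1 then ~~ inBall e N supp X n' alpha else true).

Definition ball_cand (I : eqType) (e : I) (supp : I -> I -> seq I)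
    (X : seq I) (n : nat) : seq I :=
  undup (flatten [seq wsupp e supp w | w <- words_le X n]).

(* |B_X(n)| = sum_{alpha in B_X(n)} d(alpha)^2 *)
Definition ball_weight (I : eqType) (e : I) (N : I -> I -> I -> nat)
    (supp : I -> I -> seq I) (d : I -> Rdefinitions.R) (X : seq I) (n : nat)
    : Rdefinitions.R :=
  \sum_(alpha <- ball_cand e supp X n | inBall e N supp X n alpha) d alpha ^+ 2.

(* |S_X(n)| = sum_{alpha in S_X(n)} d(alpha)^2 *)
Definition sphere_weight (I : eqType) (e : I) (N : I -> I -> I -> nat)
    (supp : I -> I -> seq I) (d : I -> Rdefinitions.R) (X : seq I) (n : nat)
    : Rdefinitions.R :=
  \sum_(alpha <- ball_cand e supp X n | inSphere e N supp X n alpha) d alpha ^+ 2.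

(* n-th root: x `^ (1/n) (powR; 0 `^ y = 0 for y <> 0) *)
Definition nroot (x : Rdefinitions.R) (n : nat) : Rdefinitions.R :=
  powR x (n%:R)^-1.

(* Main.v *)
Require Import Defs.
From HB Require Import structures.
From mathcomp Require Import all_boot all_order all_algebra.
From mathcomp Require Import all_classical all_reals all_analysis.
From mathcomp Require Import Rstruct Rstruct_topology.
From mathcomp Require Import lra.
Import Order.TTheory GRing.Theory Num.Theory.
Local Open Scope ring_scope.
Local Open Scope classical_set_scope.

Local Notation RR := Rdefinitions.R.

Lemma bern2 (d : RR) n : 0 < d ->
  1 + n%:R * d <= (1 + d) ^+ n /\ n%:R * (n%:R - 1) / 2 * d ^+ 2 <= (1 + d) ^+ n.
Proof.
move=> d0; elim: n => [|n [IH1 IH2]]; first by rewrite expr0; split; lra.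
rewrite exprSr -natr1.
set P := (1 + d) ^+ n in IH1 IH2 *.
have hn : 0 <= n%:R :> RR by rewrite ler0n.
split; nra.
Qed.

Lemma growth (K d : RR) : 0 <= K -> 0 < d ->
  exists N, forall n, (N <= n)%N -> n.+1%:R * K <= (1 + d) ^+ n.
Proof.
move=> K0 d0; set x := 4 * K / d ^+ 2.
exists (Num.trunc x).+2 => n hn.
have [_ h2] := bern2 d n d0.
have hx : x < n%:R - 1.
  apply: (lt_le_trans (truncnS_gt x)).
  have : ((Num.trunc x).+2%:R <= n%:R :> RR) by rewrite ler_nat.
  rewrite -[(Num.trunc x).+2]addn1 natrD; lra.
have d2 : 0 < d ^+ 2 by rewrite exprn_gt0.
have hxd : x * d ^+ 2 = 4 * K by rewrite /x mulfVK // gt_eqF.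
have hn1 : 1 <= n%:R :> RR.
  have : (1 <= n)%N by apply: leq_trans hn.
  by rewrite -(ler_nat RR).
apply: le_trans h2.
rewrite -natr1.
have : x * d ^+ 2 <= (n%:R - 1) * d ^+ 2 by rewrite ler_pM2r // ltW.
nra.
Qed.

Lemma nroot_ge0 x n : 0 <= nroot x n.
Proof. exact: powR_ge0. Qed.

Lemma nroot_le x y n : 0 <= x -> x <= y -> nroot x n <= nroot y n.
Proof.
move=> x0 xy; apply: ge0_ler_powR => //.
by rewrite nnegrE (le_trans x0).
Qed.

Lemma nroot_Xn t n : 0 <= t -> (0 < n)%N -> nroot (t ^+ n) n = t.
Proof.
move=> t0 n0; rewrite /nroot -powR_mulrn // -powRrM mulfV ?powRr1 //.
by rewrite pnatr_eq0 -lt0n.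
Qed.

Lemma nroot_expK x n : 0 <= x -> (0 < n)%N -> (nroot x n) ^+ n = x.
Proof.
move=> x0 n0; rewrite /nroot -powR_mulrn ?powR_ge0 // -powRrM mulVf ?powRr1 //.
by rewrite pnatr_eq0 -lt0n.
Qed.

Lemma nroot1 n : nroot 1 n = 1.
Proof. by rewrite /nroot powR1. Qed.

Lemma fekete_key (s : nat -> RR) k t : (forall n, 0 <= s n) ->
  (forall m n, s (m + n)%N <= s m * s n) -> (0 < k)%N -> 0 < t ->
  s k <= t ^+ k -> exists2 C, 0 <= C & forall n, s n <= C * t ^+ n.
Proof.
move=> s0 sM k0 t0 sk.
have tn0 : forall n, 0 < t ^+ n by move=> n; rewrite exprn_gt0.
exists (\sum_(r < k) s r / t ^+ r).
  by apply: sumr_ge0 => r _; rewrite divr_ge0 // ltW.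
elim/ltn_ind => n IH.
case: (ltnP n k) => hnk.
  rewrite (bigD1 (Ordinal hnk)) //= mulrDl mulfVK ?gt_eqF // lerDl.
  apply: mulr_ge0; last exact: ltW.
  by apply: sumr_ge0 => r _; rewrite divr_ge0 // ltW.
rewrite -{1 2}(subnKC hnk).
apply: (le_trans (sM _ _)).
rewrite exprD mulrCA.
apply: ler_pM => //.
apply: IH; rewrite ltn_subrL k0 /=; exact: leq_trans k0 hnk.
Qed.

Lemma eventually_le (u : nat -> RR) C t eps : 0 <= C -> 0 < t -> 0 < eps ->
  (forall n, 0 <= u n) -> (forall n, u n <= n.+1%:R * C * t ^+ n) ->
  exists N, forall n, (N <= n)%N -> nroot (u n) n <= t + eps.
Proof.
move=> C0 t0 e0 u0 uC.
have d0 : 0 < eps / t by rewrite divr_gt0.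
have [N HN] := growth _ _ C0 d0.
exists (maxn N 1) => n; rewrite geq_max => /andP[hN hn].
have -> : t + eps = (1 + eps / t) * t by rewrite mulrDl mul1r mulfVK // gt_eqF.
rewrite -(@nroot_Xn ((1 + eps / t) * t) n) //; last first.
  by rewrite mulr_ge0 // ?ltW // addr_gt0.
apply: nroot_le => //.
apply: (le_trans (uC n)); rewrite exprMn ler_pM2r ?exprn_gt0 //.
exact: HN.
Qed.

Lemma fekete_ball (s b : nat -> RR) :
  (forall n, 0 <= s n) -> (forall m n, s (m + n)%N <= s m * s n) ->
  (forall n, 1 <= b n) -> (forall n, s n <= b n) ->
  (forall n, b n <= \sum_(k < n.+1) s k) ->
  exists L : RR, (fun n : nat => nroot (s n) n) @ \oo --> L /\
    (fun n : nat => nroot (b n) n) @ \oo --> Num.max 1 L.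
Proof.
move=> s0 sM b1 sb bs.
pose A := [set x : RR | exists2 n, (0 < n)%N & x = nroot (s n) n].
have A0 : A !=set0 by exists (nroot (s 1%N) 1%N); exists 1%N.
have Alb : lbound A 0 by move=> x [n _ ->]; exact: nroot_ge0.
have hinf : has_inf A by split => //; exists 0.
pose L := inf A.
have L0 : 0 <= L := lb_le_inf A0 Alb.
have Llow : forall n, (0 < n)%N -> L <= nroot (s n) n.
  by move=> n n0; apply: (ge_inf (proj2 hinf)); exists n.
have key : forall t, L < t -> exists2 C, 0 <= C & forall n, s n <= C * t ^+ n.
  move=> t Lt.
  have [x [k k0 ->] hx] := inf_adherent (eps := t - L) ltac:(by rewrite subr_gt0) hinf.
  rewrite -/L subrKC in hx.
  apply: (fekete_key _ k t s0 sM k0) => //; first exact: le_lt_trans Lt.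
  rewrite -(nroot_expK _ _ (s0 k) k0).
  by rewrite lerXn2r // ?nnegrE ?nroot_ge0 // ?ltW // (le_lt_trans L0).
exists L; split.
  change ((fun n : nat => nroot (s n) n : RR^o) @ \oo --> (L : RR^o)).
  apply/cvgrPdist_le => eps e0.
  have [C C0 HC] := key (L + eps / 2) ltac:(lra).
  have sC : forall n, s n <= n.+1%:R * C * (L + eps / 2) ^+ n.
    move=> n; apply: (le_trans (HC n)); rewrite -mulrA ler_peMl //.
      by rewrite mulr_ge0 // exprn_ge0 //; lra.
    by rewrite ler1n.
  have [N HN] := eventually_le s C (L + eps / 2) (eps / 2) C0 ltac:(lra) ltac:(lra) s0 sC.
  exists (maxn N 1) => // n /=; rewrite geq_max => /andP[hN hn].
  have := HN n hN; have := Llow n hn.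
  rewrite ler_norml; lra.
change ((fun n : nat => nroot (b n) n : RR^o) @ \oo --> (Num.max 1 L : RR^o)).
apply/cvgrPdist_le => eps e0.
set M := Num.max 1 L.
have M1 : 1 <= M by rewrite le_max lexx.
have LM : L <= M by rewrite le_max lexx orbT.
have [C C0 HC] := key (M + eps / 2) ltac:(lra).
have bC : forall n, b n <= n.+1%:R * C * (M + eps / 2) ^+ n.
  move=> n; apply: (le_trans (bs n)).
  have -> : n.+1%:R * C * (M + eps / 2) ^+ n = \sum_(k < n.+1) (C * (M + eps / 2) ^+ n).
    by rewrite sumr_const card_ord -[RHS]mulr_natl mulrA.
  apply: ler_sum => k _; apply: (le_trans (HC k)); apply: ler_wpM2l => //.
  apply: ler_weXn2l; first lra.
  by rewrite -ltnS.
have b0 : forall n, 0 <= b n by move=> n; apply: le_trans (b1 n).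
have [N HN] := eventually_le b C (M + eps / 2) (eps / 2) C0 ltac:(lra) ltac:(lra) b0 bC.
exists (maxn N 1) => // n /=; rewrite geq_max => /andP[hN hn].
have := HN n hN.
have h1 : 1 <= nroot (b n) n by rewrite -(nroot1 n); apply: nroot_le.
have h2 : L <= nroot (b n) n.
  by apply: (le_trans (Llow n hn)); apply: nroot_le.
have : M <= nroot (b n) n by rewrite ge_max h1 h2.
rewrite ler_norml; lra.
Qed.


Lemma nsum_neq0 (T : eqType) (s : seq T) (P : pred T) (F : T -> nat) :
  (\sum_(i <- s | P i) F i != 0)%N <-> exists i, [/\ i \in s, P i & F i != 0%N].
Proof.
rewrite sum_nat_seq_neq0; split.
  by case/hasP => i iS /andP[Pi Fi]; exists i.
by case=> i [iS Pi Fi]; apply/hasP; exists i => //; rewrite Pi.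
Qed.

Lemma perm_sum (T : eqType) (s t : seq T) (P Q : pred T) (F : T -> RR) :
  uniq s -> uniq t -> (forall x, (P x && (x \in s)) = (Q x && (x \in t))) ->
  \sum_(x <- s | P x) F x = \sum_(x <- t | Q x) F x.
Proof.
move=> us ut H; rewrite -[LHS]big_filter -[RHS]big_filter; apply: perm_big; apply: uniq_perm.
- exact: filter_uniq.
- exact: filter_uniq.
by move=> x; rewrite !mem_filter H.
Qed.

Lemma sum_le_pred (T : eqType) (s : seq T) (P Q : pred T) (F : T -> RR) :
  (forall x, P x -> Q x) -> (forall x, 0 <= F x) ->
  \sum_(x <- s | P x) F x <= \sum_(x <- s | Q x) F x.
Proof.
move=> PQ F0; rewrite big_mkcond [X in _ <= X]big_mkcond /=.
apply: ler_sum => x _; case Px: (P x); first by rewrite PQ.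
by case: (Q x).
Qed.

Lemma sum_ge_term (T : eqType) (s : seq T) (P : pred T) (F : T -> RR) j :
  j \in s -> P j -> uniq s -> (forall x, 0 <= F x) ->
  F j <= \sum_(x <- s | P x) F x.
Proof.
move=> js Pj us F0; rewrite -big_filter (bigD1_seq j) ?filter_uniq ?mem_filter ?Pj //=.
by rewrite lerDl sumr_ge0.
Qed.

Lemma sum_sub (T : eqType) (t u : seq T) (P : pred T) (G : T -> RR) :
  uniq t -> uniq u -> (forall x, 0 <= G x) -> (forall x, G x != 0 -> x \in u) ->
  \sum_(x <- t | P x) G x <= \sum_(x <- u) G x.
Proof.
move=> ut uu G0 Gu.
have -> : \sum_(x <- t | P x) G x = \sum_(x <- t | P x && (x \in u)) G x.
  rewrite big_mkcond [RHS]big_mkcond /=; apply: eq_bigr => x _.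
  case: (P x) => //=; case xu: (x \in u) => //.
  by apply/eqP; apply: contraFT xu => /Gu.
rewrite (perm_sum _ _ _ (fun x => P x && (x \in u)) (fun x => P x && (x \in t)) G ut uu); last first.
  by move=> x; case: (P x); case: (x \in u); case: (x \in t).
exact: sum_le_pred.
Qed.

Set Implicit Arguments. Unset Strict Implicit.
Section Comb.
Variables (I : eqType) (e : I) (bar : I -> I) (N : I -> I -> I -> nat)
  (supp : I -> I -> seq I) (d : I -> RR).
Hypothesis HR : is_fusion_algebra e bar N supp d.
Variable X : seq I.

Definition sub w a := (wcoef e N supp w a != 0)%N.

Lemma Hsupp xi eta a : (N xi eta a != 0)%N -> a \in supp xi eta.
Proof. by case: HR => H _ _ _ _; apply: H. Qed.

Lemma sub_nil a : sub [::] a = (a == e).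
Proof. by rewrite /sub /=; case: (a == e). Qed.

Lemma sub_wsupp w a : sub w a -> a \in wsupp e supp w.
Proof.
elim: w a => [|x w IH] a; first by rewrite sub_nil inE.
rewrite /sub /= => /nsum_neq0 [b [bw _]].
rewrite muln_eq0 negb_or => /andP[Nb _].
rewrite mem_undup; apply/flatten_mapP; exists b => //; exact: Hsupp.
Qed.

Lemma sub_cons x w a : sub (x :: w) a <-> exists2 b, sub w b & (N x b a != 0)%N.
Proof.
split.
  rewrite /sub /= => /nsum_neq0 [b [bw _]].
  by rewrite muln_eq0 negb_or => /andP[Nb wb]; exists b.
case=> b wb Nb; rewrite /sub /=; apply/nsum_neq0; exists b; split => //.
- exact: sub_wsupp.
- by rewrite muln_eq0 negb_or Nb.
Qed.

Lemma assoc_supp x y z a :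
  (exists2 b, N x y b != 0 & N b z a != 0)%N <->
  (exists2 c, N y z c != 0 & N x c a != 0)%N.
Proof.
have Ha : forall xi eta zeta alpha,
    (\sum_(beta <- undup (supp xi eta)) N xi eta beta * N beta zeta alpha =
     \sum_(beta <- undup (supp eta zeta)) N eta zeta beta * N xi beta alpha)%N.
  by case: HR.
split.
  case=> b h1 h2.
  have : (\sum_(beta <- undup (supp x y)) N x y beta * N beta z a != 0)%N.
    apply/nsum_neq0; exists b; split => //.
      by rewrite mem_undup; apply: Hsupp.
    by rewrite muln_eq0 negb_or h1.
  rewrite Ha => /nsum_neq0 [c [_ _]].
  by rewrite muln_eq0 negb_or => /andP[c1 c2]; exists c.
case=> c h1 h2.
have : (\sum_(beta <- undup (supp y z)) N y z beta * N x beta a != 0)%N.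
  apply/nsum_neq0; exists c; split => //.
    by rewrite mem_undup; apply: Hsupp.
  by rewrite muln_eq0 negb_or h1.
rewrite -Ha => /nsum_neq0 [b [_ _]].
by rewrite muln_eq0 negb_or => /andP[c1 c2]; exists b.
Qed.

Lemma Ne_l c a : N e c a = (a == c) :> nat.
Proof. by case: HR => _ H _ _ _; case: (H c a). Qed.

Lemma W1 w1 w2 b c a : sub w1 b -> sub w2 c -> (N b c a != 0)%N -> sub (w1 ++ w2) a.
Proof.
elim: w1 b a => [|x w1 IH] b a.
  rewrite sub_nil => /eqP -> w2c; rewrite Ne_l.
  by case: (boolP (a == c)) => [/eqP -> |].
case/sub_cons => b' w1b' Nb' w2c Nbc.
have [dl h1 h2] : exists2 dl, N b' c dl != 0 & N x dl a != 0.
  by apply/assoc_supp; exists b.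
rewrite cat_cons; apply/sub_cons; exists dl => //.
exact: IH w1b' w2c h1.
Qed.

Lemma W2 w1 w2 a : sub (w1 ++ w2) a ->
  exists b c, [/\ sub w1 b, sub w2 c & (N b c a != 0)%N].
Proof.
elim: w1 a => [|x w1 IH] a.
  move=> h; exists e, a; split => //; first by rewrite sub_nil.
  by rewrite Ne_l eqxx.
rewrite cat_cons => /sub_cons [dl h1 h2].
have [b' [c [h3 h4 h5]]] := IH _ h1.
have [b h6 h7] : exists2 b, N x b' b != 0 & N b c a != 0.
  by apply/assoc_supp; exists dl.
exists b, c; split => //; apply/sub_cons; exists b'; done.
Qed.

Lemma mem_words n w : (w \in words X n) = (size w == n) && all (mem X) w.
Proof.
elim: n w => [|n IH] w.
  by case: w.
case: w => [|x w].
  apply/allpairsPdep => -[x [y [_ _ //]]].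
apply/allpairsPdep/idP.
  case=> x' [y [x'X yw [-> ->]]].
  by move: yw; rewrite IH /= eqSS => /andP[-> ->]; rewrite x'X.
rewrite /= eqSS => /andP[sw /andP[xX aw]].
by exists x, w; split => //; rewrite IH sw.
Qed.

Lemma mem_words_le n w : (w \in words_le X n) = (size w <= n)%N && all (mem X) w.
Proof.
apply/flatten_mapP/idP.
  case=> m; rewrite mem_iota add0n ltnS => mn; rewrite mem_words => /andP[/eqP sm ->].
  by rewrite sm; case/andP: mn => _ ->.
case/andP => sw aw; exists (size w); first by rewrite mem_iota add0n ltnS leq0n.
by rewrite mem_words eqxx.
Qed.

Lemma inBallP n a : reflect (exists w, [/\ (size w <= n)%N, all (mem X) w & sub w a])
  (inBall e N supp X n a).
Proof.
apply: (iffP hasP).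
  by case=> w; rewrite mem_words_le => /andP[h1 h2] h3; exists w.
by case=> w [h1 h2 h3]; exists w => //; rewrite mem_words_le h1.
Qed.

Lemma ball_cand_mem n a : inBall e N supp X n a -> a \in ball_cand e supp X n.
Proof.
case/hasP => w wl wa; rewrite mem_undup; apply/flatten_mapP; exists w => //.
exact: sub_wsupp.
Qed.

Lemma ball_mono n m a : inBall e N supp X n a -> (n <= m)%N -> inBall e N supp X m a.
Proof.
case/inBallP => w [h1 h2 h3] nm; apply/inBallP; exists w; split => //.
exact: leq_trans nm.
Qed.

Lemma ball_e n : inBall e N supp X n e.
Proof. by apply/inBallP; exists [::]; rewrite sub_nil. Qed.

Lemma ball_add m n b c a : inBall e N supp X m b -> inBall e N supp X n c ->
  (N b c a != 0)%N -> inBall e N supp X (m + n) a.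
Proof.
case/inBallP => w1 [s1 a1 h1]; case/inBallP => w2 [s2 a2 h2] Nbc.
apply/inBallP; exists (w1 ++ w2); split.
- by rewrite size_cat leq_add.
- by rewrite all_cat a1 a2.
- exact: W1 h1 h2 Nbc.
Qed.

Lemma sphereI k b : inBall e N supp X k b ->
  (forall k', k = k'.+1 -> ~~ inBall e N supp X k' b) -> inSphere e N supp X k b.
Proof. by rewrite /inSphere => -> /=; case: k => // k' H; apply: H. Qed.

Lemma sphere_split m n a : inSphere e N supp X (m + n) a ->
  exists b c, [/\ inSphere e N supp X m b, inSphere e N supp X n c & (N b c a != 0)%N].
Proof.
case/andP => /inBallP [w [sw aw wa]] hS.
rewrite -(cat_take_drop m w) in wa aw.
rewrite all_cat in aw; case/andP: aw => aw1 aw2.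
have [b [c [h1 h2 h3]]] := W2 wa.
have bB : inBall e N supp X m b.
  by apply/inBallP; exists (take m w); split => //; rewrite size_take_min geq_minl.
have cB : inBall e N supp X n c.
  apply/inBallP; exists (drop m w); split => //.
  by rewrite size_drop leq_subLR.
exists b, c; split => //.
- apply: sphereI bB _ => m' em; apply/negP => bm; move: hS; rewrite em addSn /= => /negP; apply.
  exact: ball_add bm cB h3.
- apply: sphereI cB _ => n' en; apply/negP => cn; move: hS; rewrite en addnS /= => /negP; apply.
  exact: ball_add bB cn h3.
Qed.


Lemma d_ge1 a : 1 <= d a.
Proof. by case: HR => _ _ _ _ [_ _ _ H]. Qed.

Lemma d_ge0 a : 0 <= d a.
Proof. exact: le_trans ler01 (d_ge1 a). Qed.

Lemma F_ge0 a : 0 <= d a ^+ 2.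
Proof. by rewrite exprn_ge0 // d_ge0. Qed.

Lemma dmul xi eta : d xi * d eta =
  \sum_(alpha <- undup (supp xi eta)) (N xi eta alpha)%:R * d alpha.
Proof. by case: HR => _ _ _ _ [_ H _ _]. Qed.

Lemma de1 : d e = 1.
Proof. by case: HR => _ _ _ _ [H _ _ _]. Qed.

Lemma ball_ge1 n : 1 <= ball_weight e N supp d X n.
Proof.
have := sum_ge_term _ _ _ (fun a => d a ^+ 2) _ (ball_cand_mem (ball_e n)) (ball_e n)
  (undup_uniq _) F_ge0.
by rewrite de1 expr1n.
Qed.

Lemma sphere_le_ball n : sphere_weight e N supp d X n <= ball_weight e N supp d X n.
Proof. by apply: sum_le_pred => [x /andP[]|] //; exact: F_ge0. Qed.

Lemma ball_rec n : ball_weight e N supp d X n.+1 <=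
  ball_weight e N supp d X n + sphere_weight e N supp d X n.+1.
Proof.
have -> : ball_weight e N supp d X n = \sum_(a <- ball_cand e supp X n.+1 | inBall e N supp X n a) d a ^+ 2.
  apply: perm_sum; try exact: undup_uniq.
  move=> x; case Bx: (inBall e N supp X n x) => //=.
  rewrite !ball_cand_mem //; exact: ball_mono Bx _.
rewrite /ball_weight /sphere_weight.
rewrite [E in _ <= E + _]big_mkcond [E in _ <= _ + E]big_mkcond -big_split big_mkcond /=.
apply: ler_sum => x _; rewrite /inSphere.
have := F_ge0 x.
case: (inBall e N supp X n.+1 x); case: (inBall e N supp X n x) => /= h; lra.
Qed.

Lemma ball_sum n : ball_weight e N supp d X n <= \sum_(k < n.+1) sphere_weight e N supp d X k.
Proof.
elim: n => [|n IH].
  rewrite big_ord1; apply: sum_le_pred => [x Bx|]; [by rewrite /inSphere Bx | exact: F_ge0].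
rewrite big_ord_recr /=; apply: le_trans (ball_rec n) _; by rewrite lerD2r.
Qed.

Lemma d_le_mul b c a : (N b c a != 0)%N -> d a <= d b * d c.
Proof.
move=> Nbc; rewrite dmul.
apply: le_trans (sum_ge_term _ _ xpredT (fun x => (N b c x)%:R * d x) a _ _ _ _) => //.
- have := d_ge0 a; have : 1 <= (N b c a)%:R :> RR by rewrite ler1n lt0n.
  nra.
- by rewrite mem_undup Hsupp.
- exact: undup_uniq.
- by move=> x; rewrite mulr_ge0 ?ler0n ?d_ge0.
Qed.

Lemma sphere_mul m n : sphere_weight e N supp d X (m + n) <=
  sphere_weight e N supp d X m * sphere_weight e N supp d X n.
Proof.
pose T a b c := (N b c a)%:R * d a * (d b * d c).
have T0 : forall a b c, 0 <= T a b c.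
  by move=> a b c; rewrite /T !mulr_ge0 ?ler0n ?d_ge0.
apply: (@le_trans _ _ (\sum_(a <- ball_cand e supp X (m + n) | inSphere e N supp X (m + n) a)
   \sum_(b <- ball_cand e supp X m | inSphere e N supp X m b)
   \sum_(c <- ball_cand e supp X n | inSphere e N supp X n c) T a b c)).
  apply: ler_sum => a Sa.
  have [b0 [c0 [Sb Sc Nbc]]] := sphere_split Sa.
  have Bb : inBall e N supp X m b0 by case/andP: Sb.
  have Bc : inBall e N supp X n c0 by case/andP: Sc.
  apply: le_trans (sum_ge_term _ _ _ _ b0 (ball_cand_mem Bb) Sb (undup_uniq _) _); last first.
    by move=> x; apply: sumr_ge0 => y _; exact: T0.
  apply: le_trans (sum_ge_term _ _ _ _ c0 (ball_cand_mem Bc) Sc (undup_uniq _) _); last first.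
    by move=> x; exact: T0.
  rewrite /T.
  have h1 : 1 <= (N b0 c0 a)%:R :> RR by rewrite ler1n lt0n.
  have h2 := d_le_mul Nbc.
  have h3 := d_ge1 a.
  rewrite expr2 -mulrA; apply: (@le_trans _ _ (d a * (d b0 * d c0))); first by rewrite ler_wpM2l ?d_ge0.
  by apply: ler_peMl => //; rewrite !mulr_ge0 ?d_ge0.
rewrite exchange_big /=.
rewrite /sphere_weight mulr_suml; apply: ler_sum => b Sb.
rewrite exchange_big /= mulr_sumr; apply: ler_sum => c Sc.
rewrite /T -mulr_suml.
have -> : d b ^+ 2 * d c ^+ 2 = (d b * d c) * (d b * d c) by rewrite !expr2 mulrACA.
apply: ler_wpM2r; first by rewrite mulr_ge0 ?d_ge0.
rewrite dmul; apply: sum_sub; try exact: undup_uniq.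
  by move=> x; rewrite mulr_ge0 ?ler0n ?d_ge0.
move=> x; rewrite mem_undup; apply: contraR => xs.
have : (N b c x == 0)%N by apply: contraNT xs; exact: Hsupp.
by move/eqP => ->; rewrite mul0r.
Qed.

End Comb.

Unset Implicit Arguments. Set Strict Implicit.

Theorem lemma3p12 (I : eqType) (e : I) (bar : I -> I)
    (N : I -> I -> I -> nat) (supp : I -> I -> seq I)
    (d : I -> Rdefinitions.R)
    (HR : is_fusion_algebra e bar N supp d)
    (X : seq I) (HX : is_fin_generating_set e bar N supp X) :
  exists L : Rdefinitions.R,
    (fun n : nat => nroot (sphere_weight e N supp d X n) n) @ \oo --> L /\
    (fun n : nat => nroot (ball_weight e N supp d X n) n) @ \oo --> Num.max 1 L.
Proof.
have s0 : forall n, 0 <= sphere_weight e N supp d X n.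
  by move=> n; apply: sumr_ge0 => a _; exact: (F_ge0 HR).
have [L [h1 h2]] := fekete_ball (fun n => sphere_weight e N supp d X n)
  (fun n => ball_weight e N supp d X n) s0 (sphere_mul HR X) (ball_ge1 HR X)
  (sphere_le_ball HR X) (ball_sum HR X).
by exists L; split.
Qed.
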